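(* Let $G$ be a locally finite quasi-transitive graph. Then $G$ has a periodic orientation if and only if there is a subgroup $\Gamma\subseteq\mathrm{Aut}(G)$ acting quasi-transitively on $V(G)$ such that no element of $\Gamma$ inverts an edge of $G$.
   Context: Locally finite: all degrees finite; quasi-transitive: finitely many $\mathrm{Aut}(G)$-orbits on $V(G)$; a group acts quasi-transitively if it has finitely many orbits on $V(G)$. An automorphism $g$ inverts an edge $uv$ if $g(u)=v$ and $g(v)=u$. An orientation of $G$ is periodic if the subgroup of automorphisms mapping every edge to an edge with the same orientation has finitely many orbits on $V(G)$. *)

(* Defs.v *)
From Stdlib Require Import List.

Section GraphDefs.
Variable V : Type.
Variable adj : V -> V -> Prop.

Definition symmetric_graph : Prop := forall x y, adj x y -> adj y x.
Definition loopless : Prop := forall x, ~ adj x x.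

Definition locally_finite : Prop :=
  forall x, exists l : list V, forall y, adj x y -> In y l.

Definition is_aut (g : V -> V) : Prop :=
  (exists h : V -> V, (forall x, h (g x) = x) /\ (forall y, g (h y) = y)) /\
  (forall x y, adj x y <-> adj (g x) (g y)).

Definition finitely_many_orbits (S : (V -> V) -> Prop) : Prop :=
  exists l : list V, forall x, exists r, In r l /\ exists g, S g /\ g r = x.

Definition quasi_transitive : Prop := finitely_many_orbits is_aut.

Definition is_subgroup_Aut (S : (V -> V) -> Prop) : Prop :=
  (forall g, S g -> is_aut g) /\
  S (fun x => x) /\
  (forall g h, S g -> S h -> S (fun x => g (h x))) /\
  (forall g, S g -> exists h, S h /\ forall x, h (g x) = x /\ g (h x) = x).

Definition inverts_edge (g : V -> V) (u v : V) : Prop :=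
  adj u v /\ g u = v /\ g v = u.

Definition inverts_some_edge (g : V -> V) : Prop :=
  exists u v, inverts_edge g u v.

(* an orientation: o u v means the edge uv is oriented from u to v *)
Definition is_orientation (o : V -> V -> Prop) : Prop :=
  (forall u v, o u v -> adj u v) /\
  (forall u v, adj u v -> o u v \/ o v u) /\
  (forall u v, o u v -> ~ o v u).

Definition preserves_orientation (o : V -> V -> Prop) (g : V -> V) : Prop :=
  is_aut g /\ forall u v, o u v -> o (g u) (g v).

Definition periodic_orientation (o : V -> V -> Prop) : Prop :=
  is_orientation o /\ finitely_many_orbits (preserves_orientation o).

End GraphDefs.

(* Main.v *)
Require Import Defs.
From Stdlib Require Import List.
From Stdlib Require Import Classical ClassicalEpsilon FunctionalExtensionality PropExtensionality ProofIrrelevance.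

Section Aux.
Variable V : Type.
Variable adj : V -> V -> Prop.
Variable S : (V -> V) -> Prop.
Hypothesis HS : is_subgroup_Aut V adj S.
Hypothesis Hni : forall g, S g -> ~ inverts_some_edge V adj g.

Definition C (x y : V) : V * V -> Prop := fun p =>
  exists g, S g /\ ((fst p = g x /\ snd p = g y) \/ (fst p = g y /\ snd p = g x)).

Lemma C_inv h x y : S h -> C (h x) (h y) = C x y.
Proof.
  intros Sh. destruct HS as [Ha [Hid [Hc Hinv]]].
  destruct (Hinv h Sh) as [hi [Shi Hhi]].
  apply functional_extensionality; intro p; apply propositional_extensionality.
  split; intros [g [Sg H]].
  - exists (fun z => g (h z)); split; [apply Hc; auto|]. exact H.
  - exists (fun z => g (hi z)); split; [apply Hc; auto|].
    simpl. rewrite !(proj1 (Hhi _)). exact H.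
Qed.

Lemma C_sym x y : C x y = C y x.
Proof.
  apply functional_extensionality; intro p; apply propositional_extensionality.
  split; intros [g [Sg H]]; exists g; split; auto; tauto.
Qed.

Definition rep (x y : V) : V * V := epsilon (inhabits (x, y)) (C x y).

Lemma rep_spec x y : C x y (rep x y).
Proof.
  unfold rep. apply epsilon_spec. exists (x, y).
  destruct HS as [_ [Hid _]]. exists (fun z => z); simpl; auto.
Qed.

Lemma rep_eq x y x' y' : C x y = C x' y' -> rep x y = rep x' y'.
Proof.
  intro E. unfold rep. rewrite E.
  f_equal. apply proof_irrelevance.
Qed.

Definition ori (x y : V) : Prop :=
  adj x y /\ exists g, S g /\ g (fst (rep x y)) = x /\ g (snd (rep x y)) = y.

End Aux.

Theorem lemma2p10 (V : Type) (adj : V -> V -> Prop)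
  (Hsym : symmetric_graph V adj) (Hloop : loopless V adj)
  (Hlf : locally_finite V adj) (Hqt : quasi_transitive V adj) :
  (exists o : V -> V -> Prop, periodic_orientation V adj o) <->
  (exists S : (V -> V) -> Prop,
     is_subgroup_Aut V adj S /\ finitely_many_orbits V S /\
     forall g, S g -> ~ inverts_some_edge V adj g).
Proof.
  split.
  - intros [o [[Ho1 [Ho2 Ho3]] Hf]].
    exists (preserves_orientation V adj o). split; [|split; [exact Hf|]].
    + split; [intros g [Hg _]; exact Hg|]. split.
      { split; [split; [exists (fun x => x); auto| intros; tauto]|auto]. }
      split.
      { intros g h [[[gi [g1 g2]] ga] go] [[[hi [h1 h2]] ha] ho].
        split; [split|].
        - exists (fun z => hi (gi z)); split; intros; [rewrite g1, h1 | rewrite h2, g2]; auto.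
        - intros x y; rewrite ha, ga; tauto.
        - intros u v H; apply go, ho, H. }
      intros g [[[gi [g1 g2]] ga] go].
      assert (Agi : is_aut V adj gi).
      { split; [exists g; split; auto|].
        intros x y. rewrite (ga (gi x) (gi y)), !g2. tauto. }
      exists gi. split; [split; [exact Agi|]|intros; split; auto].
      intros u v Huv.
      assert (A : adj (gi u) (gi v)) by (apply (proj1 ((proj2 Agi) u v)); apply Ho1; auto).
      destruct (Ho2 _ _ A) as [H|H]; auto.
      apply go in H. rewrite !g2 in H. exfalso; apply (Ho3 _ _ Huv H).
    + intros g [Ag go] [u [v [Huv [gu gv]]]].
      destruct (Ho2 _ _ Huv) as [H|H].
      * pose proof (go _ _ H) as H'. rewrite gu, gv in H'. exact (Ho3 _ _ H H').
      * pose proof (go _ _ H) as H'. rewrite gu, gv in H'. exact (Ho3 _ _ H H').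
  - intros [S [HS [[l Hl] Hni]]].
    exists (ori V adj S).
    destruct HS as [Ha [Hid [Hc Hinv]]] eqn:EHS.
    split; [split; [|split]|].
    + intros u v [H _]; exact H.
    + intros u v Huv.
      pose proof (rep_spec V adj S HS u v) as [g [Sg H]].
      destruct (Hinv g Sg) as [gi [Sgi Hgi]].
      destruct H as [[H1 H2]|[H1 H2]].
      * left. split; auto. exists gi; split; auto. rewrite H1, H2.
        split; apply Hgi.
      * right. split; [apply Hsym; auto|]. exists gi; split; auto.
        rewrite (rep_eq V S v u u v (C_sym V S v u)).
        rewrite H1, H2. split; apply Hgi.
    + intros u v [Huv [g [Sg [g1 g2]]]] [_ [g' [Sg' [g1' g2']]]].
      rewrite (rep_eq V S v u u v (C_sym V S v u)) in g1', g2'.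
      destruct (Hinv g Sg) as [gi [Sgi Hgi]].
      apply (Hni (fun z => g' (gi z)) (Hc _ _ Sg' Sgi)).
      exists u, v. split; auto.
      set (r := rep V S u v) in *.
      assert (E1 : gi u = fst r) by (rewrite <- g1; apply Hgi).
      assert (E2 : gi v = snd r) by (rewrite <- g2; apply Hgi).
      simpl. rewrite E1, E2. auto.
    + exists l. intros x. destruct (Hl x) as [r [Hr [g [Sg Hg]]]].
      exists r; split; auto. exists g; split; auto.
      split; [apply Ha; auto|].
      intros u v [Huv [h [Sh [h1 h2]]]].
      split; [apply (proj1 (proj2 (Ha g Sg) u v)); auto|].
      exists (fun z => g (h z)). split; [apply Hc; auto|].
      rewrite (rep_eq V S (g u) (g v) u v (C_inv V adj S HS g u v Sg)).
      rewrite h1, h2; auto.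
Qed.
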